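(* (1) Let $q,m$ be positive integers with $q<m\le 2q$ and let $s\in\{2,3\}$. Then $K_{2q}^{RT}(2m,s,2ms-3)\le q\,\big(OCAN(3,m,s,2)+CAN(2,m,2)\big)$. (2) Let $q,v\ge2$ and $m,s,t$ be positive integers with $t\ge 2$, $s\le t\le ms$ and $(t-1)q+1\le m\le (t-1)qv$. Then $K_{qv}^{RT}(m,s,ms-t)\le q\,OCAN(t,m,s,v)$.
   Context: For positive integers $m,s$, the RT poset $[m\times s]$ is the set $\{1,\ldots,ms\}$ partitioned into $m$ blocks $B_i=\{is+1,\ldots,(i+1)s\}$; each block is a chain under the usual order of the integers, and elements of different blocks are incomparable. An ideal is a down-closed subset; an anti-ideal is the complement of an ideal; $\langle A\rangle$ denotes the smallest ideal containing $A$. For $x,y\in\mathbb{Z}_q^{ms}$, $d_{RT}(x,y)=|\langle\{i:x_i\neq y_i\}\rangle|$. A code $C\subseteq \mathbb{Z}_q^{ms}$ is an $R$-covering if every $x\in\mathbb{Z}_q^{ms}$ has some $c\in C$ with $d_{RT}(x,c)\le R$; $K_q^{RT}(m,s,R)$ is the smallest size of an $R$-covering. An ordered covering array $OCA(N;t,m,s,v)$ ($2\le t\le ms$) is an $N\times ms$ array over an alphabet of size $v$ with columns labeled by the elements of $[m\times s]$ such that for every anti-ideal $J$ of size $t$, every $t$-tuple over the alphabet appears as a row of the $N\times t$ subarray formed by the columns labeled by $J$; $OCAN(t,m,s,v)$ is the least such $N$. A covering array $CA(N;t,n,v)$ is an $OCA(N;t,n,1,v)$, i.e. an $N\times n$ array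 in which every set of $t$ columns contains every $t$-tuple as a row; $CAN(t,n,v)$ is the least such $N$. *)

(* Defs.v *)
From mathcomp Require Import all_boot.

(* The RT poset [m x s] is modelled on the positions 'I_(m*s) (0-based):
   position p (element p+1 of {1..ms}) lies in block p %/ s, and two positions
   are comparable iff they lie in the same block, ordered as integers. *)
Definition rt_le (s : nat) (i j : nat) : bool := (i %/ s == j %/ s) && (i <= j).

Section RT.
Variables (m s : nat).

Definition rt_ideal (A : {set 'I_(m*s)}) : bool :=
  [forall i : 'I_(m*s), forall j : 'I_(m*s), (j \in A) && rt_le s i j ==> (i \in A)].

Definition rt_anti_ideal (J : {set 'I_(m*s)}) : bool := rt_ideal (~: J).

Definition rt_gen (A : {set 'I_(m*s)}) : {set 'I_(m*s)} :=
  \bigcap_(I : {set 'I_(m*s)} | rt_ideal I && (A \subset I)) I.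

Variable q : nat.
Definition rt_dist (x y : {ffun 'I_(m*s) -> 'I_q}) : nat :=
  #|rt_gen [set i | x i != y i]|.

Definition rt_covering (R : nat) (C : {set {ffun 'I_(m*s) -> 'I_q}}) : bool :=
  [forall x : {ffun 'I_(m*s) -> 'I_q}, [exists c in C, rt_dist x c <= R]].
End RT.

Lemma rt_covering_exists q m s R :
  exists n, [exists C : {set {ffun 'I_(m*s) -> 'I_q}},
               rt_covering m s q R C && (#|C| == n)].
Proof.
exists #|[set: {ffun 'I_(m*s) -> 'I_q}]|; apply/existsP; exists setT.
rewrite eqxx andbT; apply/forallP => x; apply/existsP; exists x.
rewrite in_setT /= /rt_dist.
have -> : [set i | x i != x i] = set0 by apply/setP => i; rewrite !inE eqxx.
apply: leq_trans (_ : #|(set0 : {set 'I_(m*s)})| <= R); last by rewrite cards0.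
apply: subset_leq_card; apply: bigcap_inf; rewrite sub0set andbT.
by apply/forallP => i; apply/forallP => j; rewrite inE.
Qed.

Definition K_RT (q m s R : nat) : nat := ex_minn (rt_covering_exists q m s R).

Definition is_OCA (N t m s v : nat)
    (A : {ffun 'I_N -> {ffun 'I_(m*s) -> 'I_v}}) : bool :=
  [forall J : {set 'I_(m*s)}, rt_anti_ideal m s J && (#|J| == t) ==>
     [forall f : {ffun 'I_(m*s) -> 'I_v},
        [exists r : 'I_N, [forall j in J, A r j == f j]]]].

Definition has_OCA (N t m s v : nat) : bool :=
  [exists A : {ffun 'I_N -> {ffun 'I_(m*s) -> 'I_v}}, @is_OCA N t m s v A].

Lemma OCA_exists t m s v : exists N, has_OCA N t m s v.
Proof.
exists #|{: {ffun 'I_(m*s) -> 'I_v}}|; apply/existsP.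
exists [ffun i => enum_val i]; apply/forallP => J; apply/implyP => _.
apply/forallP => f; apply/existsP; exists (enum_rank f).
apply/forall_inP => j _; by rewrite ffunE enum_rankK.
Qed.

Definition OCAN (t m s v : nat) : nat := ex_minn (OCA_exists t m s v).

(* CA(N;t,n,v) is an OCA(N;t,n,1,v), so CAN(t,n,v) = OCAN(t,n,1,v) *)
Definition CAN (t n v : nat) : nat := OCAN t n 1 v.

(* Main.v *)
Require Import Defs.
From mathcomp Require Import all_boot.
From mathcomp Require Import zify.

Definition ord_of {n : nat} (d : ordinal n) (x : nat) : ordinal n := odflt d (@insub nat (fun y => y < n) _ x).
Lemma ord_ofK n (d : 'I_n) x : x < n -> val (ord_of d x) = x.
Proof. by move=> h; rewrite /ord_of insubT. Qed.

Lemma dist_le m s q (x c : {ffun 'I_(m*s) -> 'I_q}) (J : {set 'I_(m*s)}) :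
  rt_anti_ideal m s J -> (forall j, j \in J -> x j = c j) ->
  rt_dist m s q x c <= m*s - #|J|.
Proof.
move=> hJ hxc; rewrite /rt_dist.
have sub : rt_gen m s [set i | x i != c i] \subset ~: J.
  apply: bigcap_inf; apply/andP; split; first exact: hJ. apply/subsetP => i; rewrite !inE.
  by apply: contra => /hxc ->.
apply: leq_trans (subset_leq_card sub) _.
have := cardsC J; rewrite card_ord => h; lia.
Qed.

Lemma anti_up m s (J : {set 'I_(m*s)}) :
  (forall i j : 'I_(m*s), i \in J -> rt_le s i j -> j \in J) -> rt_anti_ideal m s J.
Proof.
move=> h; apply/forallP => i; apply/forallP => j; apply/implyP => /andP[].
rewrite !inE => hj hle; apply: contra hj => hi; exact: h hle.
Qed.

Lemma subset_card (T : finType) (A : {set T}) n : n <= #|A| ->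
  exists B : {set T}, B \subset A /\ #|B| = n.
Proof.
elim: n => [|n IH] h; first by exists set0; rewrite sub0set cards0.
have [B [sBA cB]] := IH (ltnW h).
have : 0 < #|A :\: B| by rewrite cardsD (setIidPr sBA) cB subn_gt0.
case/card_gt0P => a; rewrite inE => /andP[aB aA].
exists (a |: B); rewrite subUset sub1set aA sBA cardsU1 aB cB; split => //.
Qed.

Lemma pigeon (T : finType) q (f : T -> nat) t : (forall x, f x < q) ->
  q * t < #|T| -> exists k, k < q /\ t < #|[set x | f x == k]|.
Proof.
move=> hf ht.
case: (pickP (fun k : 'I_q => t < #|[set x | f x == k]|)) => [k hk|H].
  by exists k; rewrite ltn_ord.
move: ht; rewrite ltnNge => /negP; case.
have -> : #|T| = \sum_(k < q) #|[set x | f x == k]|.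
  rewrite -sum1_card (partition_big (fun x => Ordinal (hf x)) predT) //=.
  apply: eq_bigr => k _; rewrite -sum1_card; apply: eq_bigl => x.
  by rewrite inE -val_eqE.
apply: leq_trans (_ : \sum_(k < q) t <= _); last by rewrite sum_nat_const card_ord; lia.
by apply: leq_sum => k _; have := H k; rewrite /= ltnNge => /negbFE.
Qed.

Lemma K_le q m s R (C : {set {ffun 'I_(m*s) -> 'I_q}}) :
  rt_covering m s q R C -> K_RT q m s R <= #|C|.
Proof.
rewrite /K_RT; case: ex_minnP => n _ H cov; apply: H; apply/existsP; exists C.
by rewrite cov eqxx.
Qed.

Lemma OCAN_spec t m s v : has_OCA (OCAN t m s v) t m s v.
Proof. by rewrite /OCAN; case: ex_minnP. Qed.

Lemma top_lt m s b : b < m -> 0 < s -> b*s + s - 1 < m*s.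
Proof. move=> hb hs; have := leq_mul hb (leqnn s); rewrite mulSn; lia. Qed.

Lemma divB s b a : a < s -> (b*s + a) %/ s = b.
Proof. move=> h; rewrite divnMDl ?divn_small ?addn0 //; lia. Qed.

Lemma blk s b j : 0 < s -> j %/ s = b -> j = b*s + j %% s /\ j %% s < s.
Proof. move=> hs h; split; last by rewrite ltn_mod. by rewrite {1}(divn_eq j s) h. Qed.

Lemma top_up s b j : 0 < s -> (b*s+s-1) %/ s = j %/ s -> b*s+s-1 <= j -> j = b*s+s-1.
Proof.
move=> hs h1 h2; have e : b*s + s - 1 = b*s + (s-1) by lia.
rewrite e divB in h1; last by lia.
have [h3 h4] := @blk s b j hs (esym h1); lia.
Qed.

Lemma divlt q v y : 0 < q -> y < q * v -> y %/ q < v.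
Proof. by move=> q0 h; rewrite ltn_divLR // mulnC. Qed.

Lemma card3 (T : finType) (a b c : T) : a != b -> a != c -> b != c ->
  #|[set a; b; c]| = 3.
Proof.
move=> ab ac bc; rewrite -setUA cardsU1 cardsU1 cards1 !inE.
by rewrite (negbTE ab) (negbTE ac) (negbTE bc).
Qed.

Lemma anti_tops n s (T : {set 'I_(n*s)}) : 0 < s ->
  (forall i, i \in T -> exists b, val i = b*s+s-1) -> rt_anti_ideal n s T.
Proof.
move=> s0 h; apply: anti_up => i j iT /andP[/eqP h1 h2].
have [b eb] := h i iT; rewrite eb in h1 h2.
have e := @top_up s b j s0 h1 h2.
by have -> : j = i by apply: val_inj; rewrite /= e eb.
Qed.

Lemma fold_top m s b : 0 < s -> b < 2*m ->
  (if b*s+s-1 < m*s then b*s+s-1 else b*s+s-1 - m*s) =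
  (if b < m then b else b - m)*s + s - 1.
Proof.
move=> s0 hb2; case: (ltnP b m) => hb.
  by rewrite (@top_lt m s b hb s0).
have h1 := leq_mul hb (leqnn s).
have -> : (b*s+s-1 < m*s) = false by apply/negbTE; rewrite -leqNgt; lia.
rewrite mulnBl; lia.
Qed.

Lemma eq_tops s a b : 0 < s -> (a*s+s-1 == b*s+s-1) = (a == b).
Proof.
move=> s0; apply/eqP/eqP => [h|->] //.
have : a * s == b * s by apply/eqP; lia.
by rewrite eqn_pmul2r // => /eqP.
Qed.

Lemma neq_top2 s a b : 2 <= s -> a*s+s-2 != b*s+s-1.
Proof.
move=> s2; apply/eqP => h.
have e1 : a*s+s-2 = a*s+(s-2) by lia.
have e2 : b*s+s-1 = b*s+(s-1) by lia.
have := congr1 (fun z => z %/ s) h; rewrite /= e1 e2 !divB; try lia.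

Qed.

Lemma up2 s P j : 2 <= s -> (P*s+s-2) %/ s = j %/ s -> P*s+s-2 <= j ->
  j = P*s+s-2 \/ j = P*s+s-1.
Proof.
move=> s2 h1 h2; have e1 : P*s+s-2 = P*s+(s-2) by lia.
rewrite e1 divB in h1; last by lia.
have [h3 h4] := @blk s P j ltac:(lia) (esym h1); lia.
Qed.

Lemma le_top m s b : 0 < s -> (m*s <= b*s+s-1) = (m <= b).
Proof.
move=> s0; case: (leqP m b) => h.
  by have := leq_mul h (leqnn s); lia.
by apply/negbTE; rewrite -ltnNge; apply: top_lt.
Qed.

Lemma lt2q k q b : k < q -> b < 2 -> k + q*b < 2*q.
Proof. move=> h1 h2; nia. Qed.

Lemma sub1_lt2 z : 1 - z < 2.
Proof. by rewrite ltnS leq_subr. Qed.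

Lemma bitflip (u w : bool) (x y : nat) : x < 2 -> y < 2 -> x != y -> w = ~~ u ->
  (if w then 1 - (if u then 1 - x else x) else (if u then 1 - x else x)) = y.
Proof. move=> hx hy nxy ->; case: u => /=; case: x hx nxy => [|[|x]] //; by case: y hy => [|[|y]]. Qed.

Lemma bitsame (u : bool) x : x < 2 ->
  (if u then 1 - (if u then 1 - x else x) else (if u then 1 - x else x)) = x.
Proof. by case: u => //=; case: x => [|[|x]]. Qed.

Lemma pi_flip m (b1 b2 : nat) : b1 < 2*m -> b2 < 2*m -> b1 != b2 ->
  (if b2 < m then b2 else b2 - m) = (if b1 < m then b1 else b1 - m) ->
  (m <= b2) = ~~ (m <= b1).
Proof.
move=> h1 h2 /eqP n12; case: (ltnP b1 m) => c1; case: (ltnP b2 m) => c2 /= e; lia.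
Qed.

Lemma pi3 m (b1 b2 b3 : nat) : b1 < 2*m -> b2 < 2*m -> b3 < 2*m ->
  b1 != b2 -> b2 != b3 -> b3 != b1 ->
  (if b2 < m then b2 else b2 - m) = (if b1 < m then b1 else b1 - m) ->
  (if b3 < m then b3 else b3 - m) != (if b1 < m then b1 else b1 - m).
Proof.
move=> h1 h2 h3 /eqP n12 /eqP n23 /eqP n31.
case: (ltnP b1 m) => c1; case: (ltnP b2 m) => c2; case: (ltnP b3 m) => c3 /= e;
  apply/eqP; lia.
Qed.

Lemma anti_J3 m s (t1 t2 t3 : 'I_(m*s)) P P3 : 2 <= s ->
  nat_of_ord t1 = P*s+s-1 -> nat_of_ord t2 = P*s+s-2 -> nat_of_ord t3 = P3*s+s-1 ->
  rt_anti_ideal m s [set t1; t2; t3].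
Proof.
move=> s2 e1 e2 e3; have s0 : 0 < s by lia.
apply: anti_up => i j; rewrite !inE => /orP[/orP[]|] /eqP -> /andP[/eqP h1 h2].
- rewrite e1 in h1 h2; have e := @top_up s P j s0 h1 h2.
  have -> : j = t1 by apply: val_inj; rewrite /= e e1.
  by rewrite eqxx ?orbT.
- rewrite e2 in h1 h2; case: (@up2 s P j s2 h1 h2) => e.
    have -> : j = t2 by apply: val_inj; rewrite /= e e2.
  by rewrite eqxx ?orbT.
  have -> : j = t1 by apply: val_inj; rewrite /= e e1.
  by rewrite eqxx ?orbT.
- rewrite e3 in h1 h2; have e := @top_up s P3 j s0 h1 h2.
  have -> : j = t3 by apply: val_inj; rewrite /= e e3.
  by rewrite eqxx ?orbT.
Qed.

Lemma top2_lt m s P : P < m -> 0 < s -> P*s+s-2 < m*s.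
Proof. move=> h s0; have := @top_lt m s P h s0; lia. Qed.

Lemma part2 (q v m s t : nat) :
  0 < q -> 0 < v -> 0 < m -> 0 < s -> 0 < t -> (t - 1) * q + 1 <= m ->
  K_RT (q * v) m s (m * s - t) <= q * OCAN t m s v.
Proof.
move=> q0 v0 m0 s0 t0 hm.
set N := OCAN t m s v.
have /existsP[A hA] : has_OCA N t m s v by exact: OCAN_spec.
have qv0 : 0 < q * v by rewrite muln_gt0 q0.
have ms0 : 0 < m * s by rewrite muln_gt0 m0.
pose d0 : 'I_(q*v) := Ordinal qv0.
pose d1 : 'I_(m*s) := Ordinal ms0.
pose dv : 'I_v := Ordinal v0.
pose enc (k : 'I_q) (r : 'I_N) : {ffun 'I_(m*s) -> 'I_(q*v)} :=
  [ffun j => ord_of d0 (k + q * A r j)].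
pose C := [set enc p.1 p.2 | p : 'I_q * 'I_N].
apply: (@leq_trans #|C|); first apply: K_le; last first.
  by apply: leq_trans (leq_imset_card _ _) _; rewrite card_prod !card_ord.
apply/forallP => x.
pose top (b : 'I_m) : 'I_(m*s) := ord_of d1 (b*s + s - 1).
have topv b : val (top b) = b*s + s - 1 by rewrite ord_ofK // top_lt.
have [k [kq hk]] := @pigeon _ q (fun b => x (top b) %% q) (t-1)
   (fun b => ltn_pmod _ q0) ltac:(rewrite card_ord; lia).
have [B [sB cB]] := @subset_card _ [set b | x (top b) %% q == k] t ltac:(lia).
pose J := top @: B.
have topI : injective top.
  move=> b1 b2 /(congr1 val); rewrite !topv => h; apply: val_inj.
  have : b1 * s == b2 * s by apply/eqP; lia.
  by rewrite eqn_pmul2r // => /eqP.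
have cJ : #|J| = t by rewrite card_imset.
have aJ : rt_anti_ideal m s J.
  apply: anti_up => i j /imsetP[b bB ->] /andP[/eqP h1 h2].
  rewrite topv in h1 h2.
  have e := @top_up s b j s0 h1 h2.
  have -> : j = top b by apply: val_inj; rewrite topv.
  exact: imset_f.
pose f : {ffun 'I_(m*s) -> 'I_v} := [ffun j => ord_of dv (x j %/ q)].
move/forallP: hA => /(_ J); rewrite aJ cJ eqxx /= => /forallP /(_ f) /existsP[r hr].
apply/existsP; exists (enc (Ordinal kq) r); apply/andP; split.
  by apply/imsetP; exists (Ordinal kq, r).
rewrite -cJ; apply: dist_le => // j hj.
move/forall_inP: hr => /(_ j hj) /eqP hAr.
case/imsetP: hj => b bB ej.
have := subsetP sB b bB; rewrite inE -ej => /eqP hres.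
apply: val_inj; rewrite ffunE /= ord_ofK; last first.
  rewrite hAr ffunE ord_ofK; last by apply: divlt.
  have := ltn_ord (x j); have := leq_divM (x j) q; nia.
rewrite hAr ffunE ord_ofK; last by apply: divlt.
have := divn_eq (x j) q; rewrite hres; move: (x j %/ q) => z; move: (nat_of_ord (x j)) => y; lia.
Qed.

Lemma part1 (q m s : nat) : 0 < q -> q < m -> 2 <= s ->
  K_RT (2 * q) (2 * m) s (2 * m * s - 3) <= q * (OCAN 3 m s 2 + CAN 2 m 2).
Proof.
move=> q0 qm s2.
have s0 : 0 < s by lia.
have m0 : 0 < m by lia.
set N1 := OCAN 3 m s 2. set N2 := CAN 2 m 2.
have /existsP[A hA] : has_OCA N1 3 m s 2 by exact: OCAN_spec.
have /existsP[B hB] : has_OCA N2 2 m 1 2 by exact: OCAN_spec.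
have q20 : 0 < 2 * q by lia.
have ms0 : 0 < m * s by rewrite muln_gt0 m0.
have m10 : 0 < m * 1 by rewrite muln1.
pose d0 : 'I_(2*q) := Ordinal q20.
pose d1 : 'I_(m*s) := Ordinal ms0.
pose d2 : 'I_(m*1) := Ordinal m10.
pose fold (p : nat) := if p < m*s then p else p - m*s.
pose enc1 (k : 'I_q) (r : 'I_N1) : {ffun 'I_(2*m*s) -> 'I_(2*q)} :=
  [ffun p : 'I_(2*m*s) => ord_of d0 (k + q * A r (ord_of d1 (fold p)))].
pose enc2 (k : 'I_q) (r : 'I_N2) : {ffun 'I_(2*m*s) -> 'I_(2*q)} :=
  [ffun p : 'I_(2*m*s) => ord_of d0 (k + q * (if m*s <= p
        then 1 - B r (ord_of d2 (fold p %/ s)) else B r (ord_of d2 (fold p %/ s))))].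
pose C1 := [set enc1 p.1 p.2 | p : 'I_q * 'I_N1].
pose C2 := [set enc2 p.1 p.2 | p : 'I_q * 'I_N2].
apply: (@leq_trans #|C1 :|: C2|); first apply: K_le; last first.
  rewrite cardsU; apply: leq_trans (leq_subr _ _) _; rewrite mulnDr leq_add //.
    by apply: leq_trans (leq_imset_card _ _) _; rewrite card_prod !card_ord.
  by apply: leq_trans (leq_imset_card _ _) _; rewrite card_prod !card_ord.
apply/forallP => x.
have ms2 : 0 < 2*m*s by rewrite !muln_gt0 m0 s0.
pose dP : 'I_(2*m*s) := Ordinal ms2.
pose top (b : 'I_(2*m)) : 'I_(2*m*s) := ord_of dP (b*s + s - 1).
have topv b : val (top b) = b*s + s - 1 by rewrite ord_ofK // top_lt.
have topn b : nat_of_ord (top b) = b*s + s - 1 := topv b.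
have topI : injective top.
  move=> b1 b2 /(congr1 val); rewrite !topv => /eqP; rewrite eq_tops // => /eqP h.
  exact: val_inj.
pose top' (i : nat) : 'I_(m*s) := ord_of d1 (i*s + s - 1).
pose pi (b : nat) := if b < m then b else b - m.
have pilt (b : 'I_(2*m)) : pi b < m by rewrite /pi; have := ltn_ord b; case: ifP; lia.
have top'v (b : 'I_(2*m)) : val (top' (pi b)) = pi b * s + s - 1.
  by rewrite ord_ofK // top_lt.
have foldv (b : 'I_(2*m)) : fold (top b) = pi b * s + s - 1.
  by rewrite topv /fold fold_top.
have foldtop (b : 'I_(2*m)) : ord_of d1 (fold (top b)) = top' (pi b).
  by apply: val_inj; rewrite top'v ord_ofK foldv // top_lt.
have [k [kq hk]] := @pigeon _ q (fun b => x (top b) %% q) 2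
   (fun b => ltn_pmod _ q0) ltac:(rewrite card_ord; lia).
set S := [set b | x (top b) %% q == k] in hk.
pose beta (b : 'I_(2*m)) := x (top b) %/ q.
have hbeta b : beta b < 2.
  by apply: divlt => //; have := ltn_ord (x (top b)); lia.
have hx b : b \in S -> val (x (top b)) = k + q * beta b.
  rewrite inE => /eqP hr; have := divn_eq (x (top b)) q; rewrite hr /beta.
  move: (x (top b) %/ q) => z; move: (x (top b)) => y /=; lia.
have main : forall b1 b2 b3, b1 \in S -> b2 \in S -> b3 \in S ->
    b1 != b2 -> b2 != b3 -> b3 != b1 -> pi b3 != pi b1 -> pi b3 != pi b2 ->
    [exists c0 in C1 :|: C2, rt_dist (2*m) s (2*q) x c0 <= 2 * m * s - 3].
  move=> b1 b2 b3 h1 h2 h3 n12 n23 n31 p31 p32.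
  have finish : forall c, c \in C1 :|: C2 -> c (top b1) = x (top b1) ->
      c (top b2) = x (top b2) -> c (top b3) = x (top b3) ->
      [exists c0 in C1 :|: C2, rt_dist (2*m) s (2*q) x c0 <= 2 * m * s - 3].
    move=> c cC e1 e2 e3; apply/existsP; exists c; rewrite cC /=.
    have cJ : #|[set top b1; top b2; top b3]| = 3.
      by rewrite card3 // (inj_eq topI) // eq_sym.
    suff : rt_dist (2*m) s (2*q) x c <= 2*m*s - #|[set top b1; top b2; top b3]|.
      by rewrite cJ.
    apply: dist_le.
      apply: anti_tops => // i; rewrite !inE => /orP[/orP[]|] /eqP ->; eexists; apply: topv.
    by move=> j; rewrite !inE => /orP[/orP[]|] /eqP ->.

  have fam1 : (pi b2 = pi b1 -> beta b2 = beta b1) ->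
    forall J' : {set 'I_(m*s)}, rt_anti_ideal m s J' -> #|J'| = 3 ->
    top' (pi b1) \in J' -> top' (pi b2) \in J' -> top' (pi b3) \in J' ->
    [exists c0 in C1 :|: C2, rt_dist (2*m) s (2*q) x c0 <= 2 * m * s - 3].
    move=> e12 J' aJ cJ i1 i2 i3.
    pose f : {ffun 'I_(m*s) -> 'I_2} := [ffun j : 'I_(m*s) => inord
       (if (j : nat) == pi b1*s+s-1 then beta b1
        else if (j : nat) == pi b2*s+s-1 then beta b2 else beta b3)].
    move/forallP: hA => /(_ J'); rewrite aJ cJ eqxx /= => /forallP /(_ f) /existsP[r hr].
    have key : forall b, b \in S -> top' (pi b) \in J' ->
        val (f (top' (pi b))) = beta b -> enc1 (Ordinal kq) r (top b) = x (top b).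
      move=> b bS bJ fb; apply: val_inj; rewrite ffunE foldtop.
      move/forall_inP: hr => /(_ _ bJ) /eqP ->.
      rewrite fb ord_ofK; last exact: lt2q (hbeta b).
      exact: esym (hx b bS).
    have fv : forall b : 'I_(2*m), val (f (top' (pi b))) = (if pi b == pi b1 then beta b1
         else if pi b == pi b2 then beta b2 else beta b3).
      move=> b; rewrite ffunE /=.
      have -> : nat_of_ord (top' (pi b)) = pi b * s + s - 1 by exact: top'v.
      rewrite !eq_tops // inordK //.
      by case: ifP => _; [|case: ifP => _]; apply: hbeta.
    apply: (finish (enc1 (Ordinal kq) r)).
    - by rewrite inE; apply/orP; left; apply/imsetP; exists (Ordinal kq, r).
    - by apply: key => //; rewrite fv eqxx.
    - apply: key => //; rewrite fv; case: eqP => [/e12 //|_]; by rewrite eqxx.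
    - by apply: key => //; rewrite fv (negbTE p31) (negbTE p32).
  have fam2 : pi b2 = pi b1 -> beta b2 != beta b1 ->
    [exists c0 in C1 :|: C2, rt_dist (2*m) s (2*q) x c0 <= 2 * m * s - 3].
    move=> e21 nb.
    pose i1 : 'I_(m*1) := ord_of d2 (pi b1).
    pose i3 : 'I_(m*1) := ord_of d2 (pi b3).
    have i1v : nat_of_ord i1 = pi b1 by rewrite ord_ofK // muln1.
    have i3v : nat_of_ord i3 = pi b3 by rewrite ord_ofK // muln1.
    pose J2 := [set i1; i3].
    have cJ2 : #|J2| = 2 by rewrite cards2 -val_eqE /= i1v i3v eq_sym p31.
    have aJ2 : rt_anti_ideal m 1 J2.
      apply: anti_up => i j iJ /andP[/eqP h1' h2']; rewrite !divn1 in h1'.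
      by have -> : j = i by apply: val_inj.
    pose beta' (b : 'I_(2*m)) := if m <= b then 1 - beta b else beta b.
    have hbeta' b : beta' b < 2 by rewrite /beta'; case: ifP => _ //; apply: sub1_lt2.
    pose g : {ffun 'I_(m*1) -> 'I_2} := [ffun j : 'I_(m*1) =>
       inord (if (j : nat) == pi b1 then beta' b1 else beta' b3)].
    move/forallP: hB => /(_ J2); rewrite aJ2 cJ2 eqxx /= => /forallP /(_ g) /existsP[r hr].
    have key : forall b : 'I_(2*m), b \in S -> (pi b = pi b1 \/ pi b = pi b3) ->
      (if m <= b then 1 - (if pi b == pi b1 then beta' b1 else beta' b3)
       else (if pi b == pi b1 then beta' b1 else beta' b3)) = beta b ->
      enc2 (Ordinal kq) r (top b) = x (top b).
      move=> b bS hb eb; apply: val_inj; rewrite ffunE /=.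
      have -> : fold (top b) %/ s = pi b.
        by rewrite foldv (_ : pi b * s + s - 1 = pi b * s + (s - 1)) ?divB; lia.
      have bJ : ord_of d2 (pi b) \in J2.
        have ev : ord_of d2 (pi b) = (if pi b == pi b1 then i1 else i3).
          by apply: val_inj; case: ifP => [/eqP e|/negbT h]; rewrite /= ?i1v ?i3v ord_ofK ?muln1 //; case: hb h => // ->; rewrite eqxx.
        rewrite ev !inE; by case: ifP; rewrite eqxx ?orbT.
      move/forall_inP: hr => /(_ _ bJ) /eqP ->.
      rewrite topn le_top // ffunE /= (@ord_ofK (m*1) d2 (pi b)); last by rewrite muln1.
      rewrite inordK; last by case: ifP.
      rewrite eb ord_ofK; last exact: lt2q (hbeta b).
      exact: esym (hx b bS).
    apply: (finish (enc2 (Ordinal kq) r)).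
    - by rewrite inE; apply/orP; right; apply/imsetP; exists (Ordinal kq, r).
    - apply: key => //; first by left. by rewrite eqxx /beta' bitsame.
    - apply: key => //; first by left. 
      rewrite e21 eqxx /beta'; apply: bitflip => //; first by rewrite eq_sym.
      apply: (@pi_flip m b1 b2); [exact: ltn_ord | exact: ltn_ord | by [] | exact: e21].
    - apply: key => //; first by right. by rewrite (negbTE p31) /beta' bitsame.
  case: (eqVneq (pi b2) (pi b1)) => [e21|p21].
    case: (eqVneq (beta b2) (beta b1)) => [eb|nb]; last exact: fam2.
    pose v2 : 'I_(m*s) := ord_of d1 (pi b1 * s + s - 2).
    have v2v : nat_of_ord v2 = pi b1 * s + s - 2 by rewrite ord_ofK // top2_lt.
    have t1v : nat_of_ord (top' (pi b1)) = pi b1 * s + s - 1 := top'v b1.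
    have t3v : nat_of_ord (top' (pi b3)) = pi b3 * s + s - 1 := top'v b3.
    apply: (fam1 (fun=> eb) [set top' (pi b1); v2; top' (pi b3)]).
    - exact: anti_J3 t1v v2v t3v.
    - rewrite card3 // -val_eqE /= ?t1v ?v2v ?t3v.
      + by rewrite eq_sym neq_top2.
      + by rewrite eq_tops // eq_sym.
      + by rewrite neq_top2.
    - by rewrite !inE eqxx.
    - by rewrite e21 !inE eqxx.
    - by rewrite !inE eqxx ?orbT.
  apply: (fam1 _ [set top' (pi b1); top' (pi b2); top' (pi b3)]).
  - by move=> e; move/eqP: p21.
  - apply: anti_tops => // i; rewrite !inE => /orP[/orP[]|] /eqP ->; eexists; apply: top'v.
  - by rewrite card3 // -val_eqE /= !top'v eq_tops // ?p21 ?p31 ?p32 // eq_sym.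
  - by rewrite !inE eqxx.
  - by rewrite !inE eqxx ?orbT.
  - by rewrite !inE eqxx ?orbT.
case/card_gt2P: hk => b1 [b2 [b3 [[h1 h2 h3] [n12 n23 n31]]]].
have hpi3 : forall a1 a2 a3 : 'I_(2*m), a1 != a2 -> a2 != a3 -> a3 != a1 ->
    pi a2 = pi a1 -> pi a3 != pi a1.
  move=> a1 a2 a3 n1 n2 n3 e.
  by apply: (@pi3 m a1 a2 a3) => //; apply: ltn_ord.
case: (eqVneq (pi b2) (pi b1)) => [e21|p21].
  have p31 := hpi3 _ _ _ n12 n23 n31 e21.
  by apply: (main b1 b2 b3) => //; rewrite e21.
case: (eqVneq (pi b3) (pi b1)) => [e31|p31].
  apply: (main b1 b3 b2) => //; try by rewrite eq_sym.
  by rewrite e31.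
case: (eqVneq (pi b3) (pi b2)) => [e32|p32].
  by apply: (main b2 b3 b1) => //; rewrite eq_sym.
exact: (main b1 b2 b3).
Qed.

Theorem corollary5 :
  (forall q m s : nat,
     0 < q -> q < m <= 2 * q -> (s == 2) || (s == 3) ->
     K_RT (2 * q) (2 * m) s (2 * m * s - 3) <= q * (OCAN 3 m s 2 + CAN 2 m 2))
  /\
  (forall q v m s t : nat,
     2 <= q -> 2 <= v -> 0 < m -> 0 < s -> 0 < t ->
     2 <= t -> s <= t <= m * s ->
     (t - 1) * q + 1 <= m <= (t - 1) * q * v ->
     K_RT (q * v) m s (m * s - t) <= q * OCAN t m s v).
Proof.
split.
  move=> q m s q0 /andP[qm _] hs; apply: part1 => //.
  by case/orP: hs => /eqP ->.
move=> q v m s t q2 v2 m0 s0 t0 _ _ /andP[hm _].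
by apply: part2 => //; lia.
Qed.
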